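(* Let $n\ge p$, let $\mathcal X\in\mathrm{St}(n,p,l)$, and let $\hat{\mathcal X}=L(\mathcal X)$. For each $i\in\{1,\dots,l\}$ let $\hat X^{(i)}_\perp\in\mathbb C^{n\times(n-p)}$ be any matrix whose column space is the orthogonal complement (in $\mathbb C^n$) of the column space of $\hat X^{(i)}$, let $\hat{\mathcal X}_\perp$ be the complex tensor with frontal slices $\hat X^{(i)}_\perp$, and let $\mathcal X_\perp=L^{-1}(\hat{\mathcal X}_\perp)$. Then the tangent space of the embedded submanifold $\mathrm{St}(n,p,l)\subset\mathbb R^{n\times p\times l}$ at $\mathcal X$ is $$T_{\mathcal X}\mathrm{St}(n,p,l)=\Big\{\mathcal X*\mathcal W+\mathcal X_\perp*\mathcal B\in\mathbb R^{n\times p\times l}\ :\ \mathcal W\in\mathbb R^{p\times p\times l}\text{ skew-symmetric},\ \mathcal B\in\mathbb R^{(n-p)\times p\times l}\Big\}.$$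
   Context: For $\mathcal A\in\mathbb R^{n\times p\times l}$ (or complex), $A^{(i)}=\mathcal A(:,:,i)$ are its frontal slices. $\operatorname{bcirc}(\mathcal A)$ is the $nl\times pl$ block circulant matrix whose $(i,j)$ block is $A^{(((i-j)\bmod l)+1)}$; $\operatorname{unfold}(\mathcal A)$ stacks $A^{(1)},\dots,A^{(l)}$ vertically, $\operatorname{fold}$ is its inverse. The t-product is $\mathcal A*\mathcal B=\operatorname{fold}(\operatorname{bcirc}(\mathcal A)\operatorname{unfold}(\mathcal B))$ for $\mathcal A$ of size $n\times p\times l$, $\mathcal B$ of size $p\times m\times l$. The transpose $\mathcal A^\top\in\mathbb R^{p\times n\times l}$ has frontal slices $(A^{(1)})^\top,(A^{(l)})^\top,\dots,(A^{(2)})^\top$. The identity tensor $\mathcal I$ has first frontal slice the identity matrix and other slices zero. $\mathrm{St}(n,p,l)=\{\mathcal X\in\mathbb R^{n\times p\times l}:\mathcal X^\top*\mathcal X=\mathcal I\}$ ($n\ge p$), an embedded submanifold of $\mathbb R^{n\times p\times l}$. A tensor $\mathcal W\in\mathbb R^{p\times p\times l}$ is skew-symmetric if $\mathcal W^\top=-\mathcal W$. The discrete Fourier transform $L(\mathcal A)=\hat{\mathcal A}\in\mathbb C^{n\times p\times l}$ has frontal slices $\hat A^{(k)}=\sum_{j=1}^l\omega^{(k-1)(j-1)}A^{(j)}$, $\omega=e^{-2\pi\mathrm i/l}$, and $L^{-1}$ is its inverse; $\mathcal C=\mathcal A*\mathcal B$ iff $\hat C^{(k)}=\hat A^{(k)}\hat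 B^{(k)}$ for all $k$.
   Formalization: $\mathcal X_\perp$ is taken as a real tensor in $\mathbb R^{n\times(n-p)\times l}$ with each $\hat X^{(i)}_\perp$ spanning the orthogonal complement of the column space of $\hat X^{(i)}$, so only choices of $\hat{\mathcal X}_\perp$ with real $L^{-1}(\hat{\mathcal X}_\perp)$ are allowed. The statement above fails without it. *)

(* Defs.v *)
From HB Require Import structures.
From mathcomp Require Import all_boot all_order all_algebra.
From mathcomp Require Import all_classical all_reals all_analysis.
From mathcomp Require Import complex.
Set Implicit Arguments. Unset Strict Implicit. Unset Printing Implicit Defensive.
Import Order.TTheory GRing.Theory Num.Theory.
Import numFieldNormedType.Exports.
Local Open Scope classical_set_scope.
Local Open Scope ring_scope.

(* A third-order tensor of size n x p x l is given by its l frontal slices,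
   indexed 0..l-1 (slice k here is A^{(k+1)} in the paper). *)
Definition tensor (K : Type) (n p l : nat) := 'I_l -> 'M[K]_(n, p).

Lemma osub_proof (l : nat) (k j : 'I_l) : ((k + (l - j)) %% l < l)%N.
Proof. by rewrite ltn_pmod // (leq_ltn_trans (leq0n _) (ltn_ord k)). Qed.

Definition osub (l : nat) (k j : 'I_l) : 'I_l := Ordinal (osub_proof k j).

Section TensorOps.
Variable K : pzRingType.

(* t-product: fold(bcirc(A) unfold(B)); block (k,j) of bcirc(A) is slice (k-j) mod l *)
Definition tprod (n p m l : nat) (A : tensor K n p l) (B : tensor K p m l)
  : tensor K n m l :=
  fun k => \sum_(j < l) A (osub k j) *m B j.

(* transpose: slices A1^T, Al^T, ..., A2^T, i.e. slice k is (A_{(0-k) mod l})^T;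
   osub k k is the index 0 *)
Definition ttr (n p l : nat) (A : tensor K n p l) : tensor K p n l :=
  fun k => (A (osub (osub k k) k))^T.

Definition tadd (n p l : nat) (A B : tensor K n p l) : tensor K n p l :=
  fun k => A k + B k.

Definition topp (n p l : nat) (A : tensor K n p l) : tensor K n p l :=
  fun k => - A k.

Definition tid (p l : nat) : tensor K p p l :=
  fun k => if val k == 0%N then 1%:M else 0.

End TensorOps.

Definition Stiefel (R : pzRingType) (n p l : nat) : set (tensor R n p l) :=
  [set X | tprod (ttr X) X = @tid R p l].

Definition tskew (R : pzRingType) (p l : nat) (W : tensor R p p l) : Prop :=
  ttr W = topp W.

Definition omega (R : realType) (l : nat) : R[i] :=
  Complex (cos (2 * pi / l%:R)) (- sin (2 * pi / l%:R)).

Definition dft (R : realType) (n p l : nat) (A : tensor R n p l)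
  : tensor R[i] n p l :=
  fun k => \sum_(j < l) (omega R l ^+ (k * j)%N) *: map_mx (fun x => Complex x 0) (A j).

Definition tangent_space (R : realType) (n p l : nat)
  (S : set (tensor R n p l)) (X : tensor R n p l) : set (tensor R n p l) :=
  [set V : tensor R n p l | exists c : R -> tensor R n p l,
     [/\ c 0 = X,
         exists2 e : R, 0 < e & forall t : R, `|t| < e -> S (c t)
       & forall (k : 'I_l) (i : 'I_n) (j : 'I_p),
           is_derive (0 : R) (1 : R) (fun t : R => c t k i j) (V k i j)]].

(* Main.v *)
Require Import Defs.
From HB Require Import structures.
From mathcomp Require Import all_boot all_order all_algebra.
From mathcomp Require Import all_classical all_reals all_analysis.
From mathcomp Require Import complex ring lra.
Import Order.TTheory GRing.Theory Num.Theory.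
Local Open Scope ring_scope.
Set Implicit Arguments. Unset Strict Implicit. Unset Printing Implicit Defensive.

Lemma osubE (l : nat) (k j : 'I_l.+1) : osub k j = (k - j)%R.
Proof. apply: val_inj => /=. by rewrite modnDmr. Qed.

Lemma ttrE (K : pzRingType) (n p l : nat) (A : tensor K n p l.+1) k :
  ttr A k = (A (- k)%R)^T.
Proof. by rewrite /ttr !osubE subrr sub0r. Qed.

Lemma tprodE (K : pzRingType) (n p m l : nat) (A : tensor K n p l.+1) (B : tensor K p m l.+1) k :
  tprod A B k = \sum_(j < l.+1) A (k - j)%R *m B j.
Proof. by apply: eq_bigr => j _; rewrite osubE. Qed.

Section TAlg.
Variable K : comPzRingType.
Variable l : nat.
Local Notation L := l.+1.

Definition tsc (n p : nat) (a : K) (A : tensor K n p L) : tensor K n p L :=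
  fun k => a *: A k.
Arguments tsc {n p} a A _.

Lemma tidE (p : nat) (k : 'I_l.+1) : @tid K p L k = if k == 0%R then 1%:M else 0.
Proof. by rewrite /tid; case: k => [[|k] hk]. Qed.

Lemma tprodA (n p q r : nat) (A : tensor K n p L) (B : tensor K p q L) (C : tensor K q r L) :
  tprod (tprod A B) C = tprod A (tprod B C).
Proof.
apply: funext => k; rewrite !tprodE.
under eq_bigr do rewrite tprodE mulmx_suml.
under [RHS]eq_bigr do rewrite tprodE mulmx_sumr.
rewrite [RHS]exchange_big /=; apply: eq_bigr => m _.
rewrite [RHS](reindex_inj (addIr m)) /=; apply: eq_bigr => j _.
by rewrite mulmxA addrK opprD addrA [_ - j - m]addrAC.
Qed.

Lemma tprodDl (n p q : nat) (A A' : tensor K n p L) (B : tensor K p q L) :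
  tprod (tadd A A') B = tadd (tprod A B) (tprod A' B).
Proof.
apply: funext => k; rewrite /tadd !tprodE -big_split /=.
by apply: eq_bigr => j _; rewrite mulmxDl.
Qed.

Lemma tprodDr (n p q : nat) (A : tensor K n p L) (B B' : tensor K p q L) :
  tprod A (tadd B B') = tadd (tprod A B) (tprod A B').
Proof.
apply: funext => k; rewrite /tadd !tprodE -big_split /=.
by apply: eq_bigr => j _; rewrite mulmxDr.
Qed.

Lemma tprodZl (n p q : nat) a (A : tensor K n p L) (B : tensor K p q L) :
  tprod (tsc a A) B = tsc a (tprod A B).
Proof.
apply: funext => k; rewrite /tsc !tprodE scaler_sumr.
by apply: eq_bigr => j _; rewrite scalemxAl.
Qed.

Lemma tprodZr (n p q : nat) a (A : tensor K n p L) (B : tensor K p q L) :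
  tprod A (tsc a B) = tsc a (tprod A B).
Proof.
apply: funext => k; rewrite /tsc !tprodE scaler_sumr.
by apply: eq_bigr => j _; rewrite scalemxAr.
Qed.

Lemma tid_prod (n p : nat) (A : tensor K n p L) : tprod (@tid K n L) A = A.
Proof.
apply: funext => k; rewrite tprodE (bigD1 k) //= big1 ?addr0.
  by rewrite tidE subrr eqxx mul1mx.
move=> j hj; rewrite tidE subr_eq0 eq_sym (negbTE hj) mul0mx //.
Qed.

Lemma tprod_tid (n p : nat) (A : tensor K n p L) : tprod A (@tid K p L) = A.
Proof.
apply: funext => k; rewrite tprodE (bigD1 0%R) //= big1 ?addr0.
  by rewrite tidE eqxx subr0 mulmx1.
by move=> j hj; rewrite tidE (negbTE hj) mulmx0.
Qed.

Lemma ttrK (n p : nat) (A : tensor K n p L) : ttr (ttr A) = A.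
Proof. by apply: funext => k; rewrite !ttrE opprK trmxK. Qed.

Lemma ttr_prod (n p q : nat) (A : tensor K n p L) (B : tensor K p q L) :
  ttr (tprod A B) = tprod (ttr B) (ttr A).
Proof.
apply: funext => k; rewrite ttrE !tprodE linear_sum.
rewrite [RHS](reindex_inj (addrI k)) /=.
apply: eq_bigr => j _; rewrite trmx_mul !ttrE.
by rewrite opprB [k + j]addrC addrK opprD [- j - k]addrC.
Qed.

Lemma ttr_add (n p : nat) (A B : tensor K n p L) : ttr (tadd A B) = tadd (ttr A) (ttr B).
Proof. by apply: funext => k; rewrite /tadd !ttrE linearD. Qed.

Lemma ttr_sc (n p : nat) a (A : tensor K n p L) : ttr (tsc a A) = tsc a (ttr A).
Proof. by apply: funext => k; rewrite /tsc !ttrE linearZ. Qed.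

Lemma ttr_tid (p : nat) : ttr (@tid K p L) = @tid K p L.
Proof. by apply: funext => k; rewrite ttrE !tidE oppr_eq0; case: eqP => _; rewrite ?trmx1 ?trmx0. Qed.

End TAlg.

Section Inv.
Variable F : fieldType.
Variables (m l : nat).
Local Notation L := l.+1.
Local Notation vT := {ffun 'I_L -> 'M[F]_m}.

Definition tmulf (Y : tensor F m m L) (Z : vT) : vT :=
  [ffun k => tprod Y (fun j => Z j) k].

Fact tmulf_is_semilinear Y : semilinear (tmulf Y).
Proof.
split=> [a A|A B]; apply/ffunP => k; rewrite !ffunE /= !tprodE.
  rewrite scaler_sumr; apply: eq_bigr => j _; rewrite ffunE scalemxAr //.
rewrite -big_split; apply: eq_bigr => j _; rewrite ffunE mulmxDr //.
Qed.
HB.instance Definition _ Y :=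
  GRing.isSemilinear.Build F vT vT _ (tmulf Y) (tmulf_is_semilinear Y).

Lemma tinv_ex (Y : tensor F m m L) :
  (forall Z : tensor F m m L, tprod Y Z = (fun _ => 0) -> Z = (fun _ => 0)) ->
  exists N : tensor F m m L, tprod Y N = @tid F m L.
Proof.
move=> hinj.
pose f : 'End(vT) := linfun (tmulf Y).
have kf : lker f == 0%VS.
  apply/lker0P => x y; rewrite !lfunE /= => e.
  have h : tprod Y (fun j => (x - y) j) = (fun _ => 0).
    apply: funext => k; have := congr1 (fun g : vT => g k) e.
    rewrite !ffunE => ek; rewrite tprodE.
    under eq_bigr do rewrite ffunE !ffunE mulmxBr.
    by rewrite sumrB -!tprodE ek subrr.
  apply/ffunP => k; have := congr1 (fun g => g k) (hinj _ h) => /= /eqP.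
  by rewrite !ffunE subr_eq0 => /eqP.
have := memvf ([ffun k => @tid F m L k] : vT).
rewrite -(lker0_limgf kf) => /memv_imgP [u _].
rewrite lfunE /= => e; exists (fun j => u j).
apply: funext => k; have := congr1 (fun g : vT => g k) e.
by rewrite !ffunE.
Qed.
End Inv.

Section Inv2.
Variable F : fieldType.
Variables (m l : nat).
Local Notation L := l.+1.

Lemma tprod0r (n p q : nat) (A : tensor F n p L) :
  tprod A (fun _ => (0 : 'M[F]_(p, q))) = (fun _ => 0).
Proof. by apply: funext => k; rewrite tprodE big1 // => j _; rewrite mulmx0. Qed.

Lemma tprod0l (n p q : nat) (A : tensor F p q L) :
  tprod (fun _ => (0 : 'M[F]_(n, p))) A = (fun _ => 0).
Proof. by apply: funext => k; rewrite tprodE big1 // => j _; rewrite mul0mx. Qed.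

Lemma tinv2 (Y : tensor F m m L) :
  (forall Z : tensor F m m L, tprod Y Z = (fun _ => 0) -> Z = (fun _ => 0)) ->
  exists N : tensor F m m L, tprod Y N = @tid F m L /\ tprod N Y = @tid F m L.
Proof.
move=> hY; have [N hN] := tinv_ex hY.
have hN' : forall Z : tensor F m m L, tprod N Z = (fun _ => 0) -> Z = (fun _ => 0).
  move=> Z hZ; by rewrite -(tid_prod Z) -hN tprodA hZ tprod0r.
have [N' hNN'] := tinv_ex hN'.
exists N; split => //.
have : Y = N' by rewrite -(tprod_tid Y) -hNN' -tprodA hN tid_prod.
by move=> ->.
Qed.
End Inv2.

Section PlusForm.
Variable F : fieldType.
Variable l : nat.
Local Notation L := l.+1.
Implicit Types (n p q : nat).

Lemma tprodDl' n p q (A A' : tensor F n p L) (B : tensor F p q L) :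
  tprod (A + A') B = tprod A B + tprod A' B.
Proof. exact: tprodDl. Qed.

Lemma tprodDr' n p q (A : tensor F n p L) (B B' : tensor F p q L) :
  tprod A (B + B') = tprod A B + tprod A B'.
Proof. exact: tprodDr. Qed.

Lemma tprodZl' n p q a (A : tensor F n p L) (B : tensor F p q L) :
  tprod (a *: A) B = a *: tprod A B.
Proof. exact: tprodZl. Qed.

Lemma tprodZr' n p q a (A : tensor F n p L) (B : tensor F p q L) :
  tprod A (a *: B) = a *: tprod A B.
Proof. exact: tprodZr. Qed.

Lemma tprod0l' n p q (B : tensor F p q L) : tprod (0 : tensor F n p L) B = 0.
Proof. exact: tprod0l. Qed.

Lemma tprod0r' n p q (A : tensor F n p L) : tprod A (0 : tensor F p q L) = 0.
Proof. exact: tprod0r. Qed.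

Lemma tprodNl n p q (A : tensor F n p L) (B : tensor F p q L) :
  tprod (- A) B = - tprod A B.
Proof. by rewrite -scaleN1r tprodZl' scaleN1r. Qed.

Lemma tprodNr n p q (A : tensor F n p L) (B : tensor F p q L) :
  tprod A (- B) = - tprod A B.
Proof. by rewrite -scaleN1r tprodZr' scaleN1r. Qed.

Lemma tprodBl n p q (A A' : tensor F n p L) (B : tensor F p q L) :
  tprod (A - A') B = tprod A B - tprod A' B.
Proof. by rewrite tprodDl' tprodNl. Qed.

Lemma tprodBr n p q (A : tensor F n p L) (B B' : tensor F p q L) :
  tprod A (B - B') = tprod A B - tprod A B'.
Proof. by rewrite tprodDr' tprodNr. Qed.

Lemma ttrD n p (A B : tensor F n p L) : ttr (A + B) = ttr A + ttr B.
Proof. exact: ttr_add. Qed.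

Lemma ttrZ n p a (A : tensor F n p L) : ttr (a *: A) = a *: ttr A.
Proof. exact: ttr_sc. Qed.

Lemma ttrN n p (A : tensor F n p L) : ttr (- A) = - ttr A.
Proof. by rewrite -scaleN1r ttrZ scaleN1r. Qed.

Lemma ttrB n p (A B : tensor F n p L) : ttr (A - B) = ttr A - ttr B.
Proof. by rewrite ttrD ttrN. Qed.

Lemma ttr0 n p : ttr (0 : tensor F n p L) = 0.
Proof. by apply: funext => k; rewrite ttrE /= trmx0. Qed.

End PlusForm.

Section Gram.
Variable R : realFieldType.
Variable l : nat.
Local Notation L := l.+1.

Lemma gram_diag (n p : nat) (T : tensor R n p L) a :
  tprod (ttr T) T 0 a a = \sum_(j < L) \sum_(r < n) T j r a ^+ 2.
Proof.
rewrite tprodE summxE; apply: eq_bigr => j _.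
by rewrite ttrE sub0r opprK mxE; apply: eq_bigr => r _; rewrite mxE expr2.
Qed.

Lemma gram_ge0 (n p : nat) (T : tensor R n p L) a : 0 <= tprod (ttr T) T 0 a a.
Proof. by rewrite gram_diag; apply: sumr_ge0 => j _; apply: sumr_ge0 => r _; apply: sqr_ge0. Qed.

Lemma sqr_le_gram (n p : nat) (T : tensor R n p L) k i a :
  T k i a ^+ 2 <= tprod (ttr T) T 0 a a.
Proof.
rewrite gram_diag (bigD1 k) //= (bigD1 i) //= -addrA lerDl.
apply: addr_ge0; first by apply: sumr_ge0 => r _; apply: sqr_ge0.
by apply: sumr_ge0 => j _; apply: sumr_ge0 => r _; apply: sqr_ge0.
Qed.

Lemma gram2_eq0 (n m p : nat) (P : tensor R n p L) (Q : tensor R m p L) :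
  tadd (tprod (ttr P) P) (tprod (ttr Q) Q) = (fun _ => 0) ->
  P = (fun _ => 0) /\ Q = (fun _ => 0).
Proof.
move=> h.
have h0 : forall a, tprod (ttr P) P 0 a a + tprod (ttr Q) Q 0 a a = 0.
  by move=> a; have := congr1 (fun f : tensor R p p L => f 0 a a) h; rewrite /tadd /= mxE => ->; rewrite mxE.
have hP : forall a, tprod (ttr P) P 0 a a = 0.
  move=> a; apply/eqP; rewrite eq_le gram_ge0 andbT -(h0 a) lerDl; exact: gram_ge0.
have hQ : forall a, tprod (ttr Q) Q 0 a a = 0.
  by move=> a; have := h0 a; rewrite hP add0r.
split; apply: funext => k; apply/matrixP => i a; rewrite mxE; apply/eqP;
  rewrite -sqrf_eq0 eq_le sqr_ge0 andbT.
  by rewrite -(hP a) sqr_le_gram.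
by rewrite -(hQ a) sqr_le_gram.
Qed.

End Gram.

Section Omega.
Variable R : realType.
Variable l : nat.
Local Notation L := l.+1.
Local Notation w := (omega R L).
Local Notation th := (2 * pi / (L%:R : R)).

Lemma omega_pow m : w ^+ m = Complex (cos (m%:R * th)) (- sin (m%:R * th)).
Proof.
elim: m => [|m IH]; first by rewrite expr0 mul0r cos0 sin0 oppr0.
rewrite exprSr IH /omega; set t := 2 * pi / _. rewrite -[m.+1]addn1 natrD mulrDl mul1r cosD sinD. simpc; congr Complex; ring.

Qed.

Lemma L_neq0 : (L%:R : R) != 0.
Proof. by rewrite pnatr_eq0. Qed.

Lemma omegaL : w ^+ L = 1.
Proof.
rewrite omega_pow mulrC divfK ?L_neq0 //.
have -> : 2 * pi = pi *+ 2 :> R by rewrite mulr_natl.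
by rewrite cos2pi sin2pi oppr0.
Qed.

Lemma omega_mod m : w ^+ (m %% L) = w ^+ m.
Proof. exact: expr_mod omegaL. Qed.

Lemma omega_neq1 m : (0 < m < L)%N -> w ^+ m != 1.
Proof.
case/andP => m0 mL; rewrite omega_pow; apply/eqP => -[hc _].
set x := m%:R * th in hc.
have hx : x = (x / 2) *+ 2 by rewrite -mulr_natr mulfVK // pnatr_eq0.
have : 0 < sin (x / 2).
  apply: sin_gt0_pi; apply/andP; split.
    rewrite /x divr_gt0 // ?mulr_gt0 ?divr_gt0 ?ltr0n ?pi_gt0 //.
  rewrite /x.
  have -> : m%:R * (2 * pi / L%:R) / 2 = pi * (m%:R / L%:R) :> R.
    by field; rewrite paddr_eq0 ?ler0n // oner_eq0.
  rewrite gtr_pMr ?pi_gt0 // ltr_pdivrMr ?ltr0n // mul1r ltr_nat //.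
rewrite hx cos_mulr2n in hc.
have hs : sin (x / 2) ^+ 2 = 0.
  rewrite sin2cos2; apply/eqP; rewrite subr_eq0; apply/eqP.
  by move: hc => /eqP; rewrite subr_eq addrC -mulr2n -subr_eq0 -mulrnBl mulrn_eq0 /= subr_eq0 => /eqP.
by move/eqP: hs; rewrite sqrf_eq0 => /eqP ->; rewrite ltxx.
Qed.

Lemma omega_conjK a : (w ^+ a)^*%C * w ^+ a = 1.
Proof.
rewrite omega_pow /=; simpc; rewrite -!expr2 cos2Dsin2.
by congr Complex; ring.
Qed.

Lemma omega_conj a b : ((a + b) %% L = 0)%N -> (w ^+ a)^*%C = w ^+ b.
Proof.
move=> h; rewrite -[LHS]mulr1.
have <- : w ^+ a * w ^+ b = 1 by rewrite -exprD -omega_mod h expr0.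
by rewrite mulrA omega_conjK mul1r.
Qed.

Lemma val_add (x y : 'I_L) : val (x + y)%R = ((x + y) %% L)%N.
Proof. by []. Qed.

Lemma val_opp (x : 'I_L) : val (- x)%R = ((L - x) %% L)%N.
Proof. by []. Qed.

Lemma omega_addk k (i j : 'I_L) : w ^+ (k * (i + j)%R) = w ^+ (k * i) * w ^+ (k * j).
Proof. by rewrite val_add -omega_mod modnMmr omega_mod mulnDr exprD. Qed.

Lemma omega_conj_opp k (j : 'I_L) : (w ^+ (k * j))^*%C = w ^+ (k * (- j)%R).
Proof.
apply: omega_conj; rewrite -mulnDr -modnMmr.
have -> : ((j + (- j)%R) %% L = 0)%N by rewrite -val_add subrr.
by rewrite muln0.
Qed.

End Omega.

Section DFT.
Variable R : realType.
Variable l : nat.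
Local Notation L := l.+1.
Local Notation w := (omega R L).
Local Notation rc := (real_complex R).

Lemma dftE (n p : nat) (A : tensor R n p L) k :
  dft A k = \sum_(j < L) w ^+ (k * j) *: map_mx rc (A j).
Proof. by []. Qed.

Lemma dft_mul (n p q : nat) (A : tensor R n p L) (B : tensor R p q L) k :
  dft (tprod A B) k = dft A k *m dft B k.
Proof.
rewrite !dftE mulmx_suml.
under eq_bigr do rewrite tprodE raddf_sum scaler_sumr.
under [RHS]eq_bigr do rewrite mulmx_sumr.
rewrite exchange_big [RHS]exchange_big /=; apply: eq_bigr => i _.
rewrite (reindex_inj (addIr i)) /=; apply: eq_bigr => j _.
rewrite addrK map_mxM omega_addk -scalerA scalemxAl scalemxAr -!scalemxAl -!scalemxAr !scalerA mulrC //.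
Qed.


Lemma map_conj_rc (n p : nat) (M : 'M[R]_(n, p)) :
  map_mx (@conjc R) (map_mx rc M) = map_mx rc M.
Proof. by apply/matrixP => i j; rewrite !mxE conjc_real. Qed.

Lemma dft_tr (n p : nat) (A : tensor R n p L) k :
  dft (ttr A) k = (map_mx (@conjc R) (dft A k))^T.
Proof.
rewrite !dftE raddf_sum linear_sum /=.
rewrite (reindex_inj (inv_inj (@opprK _))) /=.
apply: eq_bigr => j _.
rewrite ttrE opprK map_mxZ map_conj_rc linearZ /= omega_conj_opp map_trmx //.
Qed.

Lemma dft_inj (n p : nat) (A : tensor R n p L) :
  (forall k, dft A k = 0) -> A = (fun _ => 0).
Proof.
move=> h; apply: funext => j0; apply/matrixP => a b; rewrite mxE.
have hk : forall k : 'I_L, \sum_(j < L) w ^+ (k * j) * rc (A j a b) = 0.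
  move=> k; transitivity (dft A k a b); last by rewrite h mxE.
  by rewrite dftE summxE; apply: eq_bigr => j _; rewrite !mxE.
have hS : \sum_(k < L) w ^+ (k * (- j0)%R) * \sum_(j < L) w ^+ (k * j) * rc (A j a b) = 0.
  by apply: big1 => k _; rewrite hk mulr0.
have inner : forall j : 'I_L, \sum_(k < L) w ^+ (k * (- j0)%R) * w ^+ (k * j) =
    if j == j0 then L%:R else 0.
  move=> j.
  have e : forall k : 'I_L, w ^+ (k * (- j0)%R) * w ^+ (k * j) = (w ^+ (j - j0)%R) ^+ k.
    move=> k; rewrite -omega_addk -exprM mulnC //.
    by rewrite addrC.
  under eq_bigr do rewrite e.
  case: eqP => [->|ne].
    by rewrite subrr expr0; under eq_bigr do rewrite expr1n; rewrite sumr_const card_ord.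
  have ne0 : w ^+ (j - j0)%R != 1.
    apply: omega_neq1; rewrite ltn_ord andbT lt0n.
    apply/negP => /eqP h0; apply: ne; apply/eqP; rewrite -subr_eq0; apply/eqP.
    by apply: val_inj.
  have := subrX1 (w ^+ (j - j0)%R) L.
  rewrite -exprM mulnC exprM omegaL expr1n subrr => /esym /eqP.
  rewrite mulf_eq0 subr_eq0 (negbTE ne0) /= => /eqP hs.
  exact: hs.
move: hS.
under eq_bigr do rewrite mulr_sumr.
rewrite exchange_big /=.
under eq_bigr do (under eq_bigr do rewrite mulrA; rewrite -mulr_suml inner).
rewrite (bigD1 j0) //= big1 ?addr0; last by move=> j /negbTE ->; rewrite mul0r.
rewrite eqxx => /eqP; rewrite mulf_eq0 pnatr_eq0 /= => /eqP.
by case.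
Qed.
End DFT.

Section Perp.
Variable R : realType.
Local Notation C := R[i].

Definition mxH (m n : nat) (M : 'M[C]_(m, n)) := (map_mx (@conjc R) M)^T.

Lemma mxH_mul (m n q : nat) (A : 'M[C]_(m, n)) (B : 'M[C]_(n, q)) :
  mxH (A *m B) = mxH B *m mxH A.
Proof. by rewrite /mxH map_mxM trmx_mul. Qed.

Lemma self_orth (m : nat) (v : 'cV[C]_m) : mxH v *m v = 0 -> v = 0.
Proof.
move=> h; have := congr1 (fun M : 'M[C]_1 => M 0 0) h; rewrite !mxE /= => h0.
have h1 : forall i, (v i 0)^*%C * v i 0 = 0.
  move=> i; apply/eqP; move/eqP: h0; rewrite psumr_eq0.
    by move/allP => /(_ i (mem_index_enum _)); rewrite !mxE.
  by move=> j _; rewrite !mxE mulrC mulcJ_ge0.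
apply/matrixP => i j; rewrite ord1 mxE; apply/eqP.
by have := h1 i; move/eqP; rewrite mulf_eq0 conjc_eq0 orbb.
Qed.

Lemma col_sub_tr (m n : nat) (A : 'M[C]_(m, n)) j : ((col j A)^T <= A^T)%MS.
Proof. by rewrite tr_col row_sub. Qed.

Lemma perp_orth (n p q l : nat) (X : tensor R n p l.+1) (Xp : tensor R n q l.+1)
  (hperp : forall (k : 'I_l.+1) (v : 'cV[C]_n),
     ((v^T <= (dft Xp k)^T)%MS <->
      (forall u : 'cV[C]_n, (u^T <= (dft X k)^T)%MS ->
         (map_mx (@conjc R) u)^T *m v = 0))) :
  tprod (ttr X) Xp = (fun _ => 0).
Proof.
apply: dft_inj => k; rewrite dft_mul dft_tr.
apply/matrixP => a b; rewrite [RHS]mxE.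
have := (proj1 (hperp k (col b (dft Xp k))) (col_sub_tr _ _)) _ (col_sub_tr (dft X k) a).
move=> /(congr1 (fun M : 'M[C]_1 => M 0 0)); rewrite !mxE => e; rewrite -[RHS]e.
by apply: eq_bigr => r _; rewrite !mxE.
Qed.

Lemma perp_zero (n p q m l : nat) (X : tensor R n p l.+1) (Xp : tensor R n q l.+1)
  (hperp : forall (k : 'I_l.+1) (v : 'cV[C]_n),
     ((v^T <= (dft Xp k)^T)%MS <->
      (forall u : 'cV[C]_n, (u^T <= (dft X k)^T)%MS ->
         (map_mx (@conjc R) u)^T *m v = 0)))
  (Z : tensor R n m l.+1) :
  tprod (ttr X) Z = (fun _ => 0) -> tprod (ttr Xp) Z = (fun _ => 0) -> Z = (fun _ => 0).
Proof.
move=> h1 h2; apply: dft_inj => k.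
have e1 : mxH (dft X k) *m dft Z k = 0.
  by rewrite /mxH -dft_tr -dft_mul h1 dftE big1 // => j _; rewrite map_mx0 scaler0.
have e2 : mxH (dft Xp k) *m dft Z k = 0.
  by rewrite /mxH -dft_tr -dft_mul h2 dftE big1 // => j _; rewrite map_mx0 scaler0.
apply/matrixP => a c; rewrite [RHS]mxE.
set v := col c (dft Z k).
have hv1 : mxH (dft X k) *m v = 0 by rewrite /v colE mulmxA e1 mul0mx.
have hv2 : mxH (dft Xp k) *m v = 0 by rewrite /v colE mulmxA e2 mul0mx.
have : (v^T <= (dft Xp k)^T)%MS.
  apply/(hperp k v) => u /submxP [D hD].
  have -> : u = dft X k *m D^T by rewrite -[u]trmxK hD trmx_mul trmxK.
  by rewrite map_mxM trmx_mul -mulmxA -/(mxH (dft X k)) hv1 mulmx0.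
case/submxP => E hE.
have hv : v = dft Xp k *m E^T by rewrite -[v]trmxK hE trmx_mul trmxK.
have : mxH v *m v = 0 by rewrite {1}hv mxH_mul -mulmxA hv2 mulmx0.
move/self_orth => v0.
by have := congr1 (fun M : 'cV[C]_n => M a 0) v0; rewrite /v !mxE.
Qed.
End Perp.

Section Deriv.
Variable R : realType.

Lemma deriv_loc_cst (f : R -> R) (a d e : R) : 0 < e ->
  (forall t, `|t| < e -> f t = a) -> is_derive (0:R) (1:R) f d -> d = 0.
Proof.
move=> e0 hf hd.
have h1 : 'D_(1:R) f (0:R) = d := @derive_val _ _ _ _ _ _ _ hd.
have h2 : 'D_(1:R) f (0:R) = 'D_(1:R) (cst a) (0:R).
  apply: near_eq_derive; apply/nbhs_norm0P; exists e => // t /= ht.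
have h3 : 'D_(1:R) (cst a : R -> R) (0:R) = 0 := @derive_val _ _ _ _ _ _ _ (is_derive_cst a _ _).
by rewrite -h1 h2 h3.
Qed.



Lemma deriv_gram (n p l : nat) (c : R -> tensor R n p l.+1) (X V : tensor R n p l.+1)
  (c0 : c 0 = X)
  (hd : forall k i j, is_derive (0:R) (1:R) (fun t => c t k i j) (V k i j)) k a b :
  is_derive (0:R) (1:R) (fun t => tprod (ttr (c t)) (c t) k a b)
    ((tadd (tprod (ttr V) X) (tprod (ttr X) V)) k a b).
Proof.
have -> : (fun t => tprod (ttr (c t)) (c t) k a b) =
   \sum_(j < l.+1) \sum_(r < n) ((fun t => c t (- (k - j))%R r a) * (fun t => c t j r b)).
  apply: funext => t; rewrite tprodE summxE fct_sumE; apply: eq_bigr => j _.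
  rewrite mxE fct_sumE; apply: eq_bigr => r _; by rewrite ttrE !mxE.
have H := is_derive_sum (fun j => is_derive_sum (fun r => is_deriveM
   (hd (- (k - j))%R r a) (hd j r b))).
suff -> : (tadd (tprod (ttr V) X) (tprod (ttr X) V)) k a b =
  \sum_(j < l.+1) \sum_(r < n) (c 0 (- (k - j))%R r a *: V j r b + c 0 j r b *: V (- (k - j))%R r a).
  exact: H.
rewrite /tadd !tprodE mxE !summxE -big_split /=; apply: eq_bigr => j _.
rewrite !mxE -big_split /=; apply: eq_bigr => r _.
by rewrite !ttrE !mxE c0 /GRing.scale /= addrC mulrC [X j r b * _]mulrC.
Qed.

End Deriv.

Section Quad.
Variable R : realType.

Lemma deriv_quad (f g : R -> R) (x0 v C : R) :
  (forall t, f t = x0 + t * v + t ^+ 2 * g t) -> (forall t, `|g t| <= C) ->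
  is_derive (0:R) (1:R) f v.
Proof.
move=> hf hg; apply/is_derive1_caratheodory.
exists (fun z => v + z * g z); split.
- by move=> z; rewrite !hf !mul0r expr0n /= mul0r !addr0 subr0; ring.
- have C0 : 0 <= C by apply: le_trans (hg 0); apply: normr_ge0.
  have C1 : 0 < C + 1 by apply: ltr_wpDl C0 ltr01.
  apply/cvgrPdist_lt => eps eps0.
  exists (eps / (C + 1)).
    by rewrite /= divr_gt0.
  move=> z /= hz; rewrite sub0r normrN in hz; rewrite mul0r addr0 opprD addNKr normrN normrM.
  apply: (le_lt_trans (y := `|z| * (C + 1))).
    apply: ler_pM => //; apply: le_trans (hg z) _; rewrite lerDl ler01 //.
  by rewrite -ltr_pdivlMr.
- by rewrite mul0r addr0.
Qed.
End Quad.

Section Curve.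
Variable R : realType.
Variables (n p q l : nat).
Local Notation L := l.+1.
Local Notation "A ** B" := (tprod A B) (at level 40, left associativity).
Local Notation I := (@tid R n L).
Variable X : tensor R n p L.
Variable Xp : tensor R n q L.
Variable W : tensor R p p L.
Variable B : tensor R q p L.
Hypothesis hX : ttr X ** X = @tid R p L.
Hypothesis hXXp : ttr Xp ** X = 0.
Hypothesis hW : ttr W = - W.

Definition V := X ** W + Xp ** B.
Definition Am := X ** W ** ttr X + Xp ** B ** ttr X - X ** ttr B ** ttr Xp.

Lemma AmX : Am ** X = V.
Proof.
rewrite /Am /V !tprodDl' tprodNl !tprodA hX hXXp !tprod0r' subr0 !tprod_tid //.
Qed.

Lemma Am_skew : ttr Am = - Am.
Proof.
rewrite /Am ttrB ttrD !ttr_prod !ttrK hW.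
by rewrite tprodNl tprodNr !tprodA opprB opprD addrCA addrA.
Qed.



End Curve.

Section Cayley.
Variable R : realType.
Variables (n l : nat).
Local Notation L := l.+1.
Local Notation "A ** B" := (tprod A B) (at level 40, left associativity).
Local Notation I := (@tid R n L).
Variable A : tensor R n n L.
Hypothesis hA : ttr A = - A.

Definition Ym (s : R) := I - s *: A.
Definition Yp (s : R) := I + s *: A.

Lemma ttrYm s : ttr (Ym s) = Yp s.
Proof. by rewrite /Ym /Yp ttrB ttr_tid ttrZ hA scalerN opprK. Qed.

Lemma ttrYp s : ttr (Yp s) = Ym s.
Proof. by rewrite -ttrYm ttrK. Qed.

Lemma YpYm s : Yp s ** Ym s = I - (s * s) *: (A ** A).
Proof.
rewrite /Yp /Ym tprodDl' tid_prod tprodZl' tprodBr tprod_tid tprodZr' scalerBr scalerA.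
by rewrite addrA subrK.
Qed.

Lemma YmYp s : Ym s ** Yp s = I - (s * s) *: (A ** A).
Proof.
rewrite /Yp /Ym tprodBl tid_prod tprodZl' tprodDr' tprod_tid tprodZr' scalerDr scalerA.
by rewrite opprD addrA addrK.
Qed.

Lemma gramYm (m : nat) s (Z : tensor R n m L) :
  ttr (Ym s ** Z) ** (Ym s ** Z) = ttr Z ** Z + ttr (s *: (A ** Z)) ** (s *: (A ** Z)).
Proof.
rewrite ttr_prod ttrYm tprodA -[Yp s ** (Ym s ** Z)]tprodA YpYm tprodBl tid_prod.
rewrite tprodZl' tprodBr tprodZr' ttrZ ttr_prod hA tprodZl' tprodZr' tprodNr tprodNl.
by rewrite scalerN scalerN scalerA !tprodA.
Qed.

Lemma Ym_inj s (Z : tensor R n n L) : Ym s ** Z = (fun _ => 0) -> Z = (fun _ => 0).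
Proof.
move=> h.
have := gramYm s Z; rewrite h ttr0 tprod0r' => /esym h2.
by have [] := gram2_eq0 h2.
Qed.



Lemma N_ex s : exists N, Ym s ** N = I /\ N ** Ym s = I.
Proof. exact: tinv2 (@Ym_inj s). Qed.

Definition Nt s := proj1_sig (cid (N_ex s)).

Lemma NtR s : Ym s ** Nt s = I.
Proof. by rewrite /Nt; case: cid => N [] /=. Qed.

Lemma NtL s : Nt s ** Ym s = I.
Proof. by rewrite /Nt; case: cid => N [] /=. Qed.

Lemma Nt_comm s : Nt s ** Yp s = Yp s ** Nt s.
Proof.
transitivity (Nt s ** (Yp s ** (Ym s ** Nt s))); first by rewrite NtR tprod_tid.
rewrite -(tprodA (Yp s)) YpYm -YmYp tprodA -[Nt s ** (Ym s ** _)]tprodA NtL tid_prod //.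
Qed.

Lemma ttrNt s : ttr (Nt s) ** Yp s = I.
Proof. by rewrite -ttrYm -ttr_prod NtR ttr_tid. Qed.

Lemma curve_St (p : nat) s (X : tensor R n p L) (hX : ttr X ** X = @tid R p L) :
  ttr (Nt s ** (Yp s ** X)) ** (Nt s ** (Yp s ** X)) = @tid R p L.
Proof.
have e1 : Nt s ** (Yp s ** X) = Yp s ** (Nt s ** X) by rewrite -!tprodA Nt_comm.
rewrite {2}e1 !ttr_prod ttrYp !tprodA.
rewrite -[ttr (Nt s) ** (Yp s ** _)]tprodA ttrNt tid_prod.
by rewrite -[Ym s ** (Nt s ** X)]tprodA NtR tid_prod hX.
Qed.

Lemma Ym0 : Ym 0 = I. Proof. by rewrite /Ym scale0r subr0. Qed.
Lemma Yp0 : Yp 0 = I. Proof. by rewrite /Yp scale0r addr0. Qed.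

Lemma Nt0 : Nt 0 = I.
Proof. by have := NtL 0; rewrite Ym0 tprod_tid. Qed.

Lemma curve_expand (p : nat) t (X V : tensor R n p L) (hAX : A ** X = V) :
  Nt (t / 2) ** (Yp (t / 2) ** X) = X + t *: V + (t * (t / 2)) *: (Nt (t / 2) ** (A ** V)).
Proof.
set s := t / 2; set N := Nt s.
have hs : s + s = t by rewrite /s; field.
have eNV : N ** V = V + s *: (N ** (A ** V)).
  have h : V = N ** V - s *: (N ** (A ** V)).
    have e : Ym s ** V = V - s *: (A ** V) by rewrite /Ym tprodBl tid_prod tprodZl'.
    by rewrite -tprodZr' -tprodBr -e -tprodA NtL tid_prod.
  by apply/eqP; rewrite -subr_eq; apply/eqP; rewrite -h.
have eNX : N ** X = X + s *: (N ** V).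
  have h : X = N ** X - s *: (N ** V).
    have e : Ym s ** X = X - s *: V by rewrite /Ym tprodBl tid_prod tprodZl' hAX.
    by rewrite -tprodZr' -tprodBr -e -tprodA NtL tid_prod.
  by apply/eqP; rewrite -subr_eq; apply/eqP; rewrite -h.
rewrite /Yp tprodDl' tid_prod tprodZl' hAX tprodDr' tprodZr' eNX eNV.
by rewrite -addrA -scalerDl hs scalerDr scalerA addrA.
Qed.



Lemma Nt_bound s k i j : `|Nt s k i j| <= 1.
Proof.
have h := gramYm s (Nt s); rewrite NtR ttr_tid tid_prod in h.
have h1 := congr1 (fun M : tensor R n n L => M 0 j j) h.
rewrite /= tidE eqxx mxE eqxx /= [in RHS]mxE in h1.
have hb : Nt s k i j ^+ 2 <= 1.
  apply: (le_trans (sqr_le_gram _ k i j)).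
  apply: (le_trans (y := (ttr (Nt s) ** Nt s) 0 j j + (ttr (s *: (A ** Nt s)) ** (s *: (A ** Nt s))) 0 j j)).
    by rewrite lerDl; exact: gram_ge0.
  by rewrite -h1.
rewrite ler_norml; apply/andP; split; nra.
Qed.

Lemma Nt_prod_bound (m : nat) s (M : tensor R n m L) k i j :
  `|(Nt s ** M) k i j| <= \sum_(a < L) \sum_(r < n) `|M a r j|.
Proof.
rewrite tprodE summxE; apply: (le_trans (ler_norm_sum _ _ _)); apply: ler_sum => a _.
rewrite mxE; apply: (le_trans (ler_norm_sum _ _ _)); apply: ler_sum => r _.
by rewrite normrM ler_piMl ?normr_ge0 ?Nt_bound.
Qed.

End Cayley.
Unset Implicit Arguments.
Local Open Scope classical_set_scope.
Local Open Scope ring_scope.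

Theorem mainTheorem2 (R : realType) (n p l : nat) (hpn : (p <= n)%N)
  (X : tensor R n p l) (hX : Stiefel X)
  (Xperp : tensor R n (n - p) l)
  (hperp : forall (k : 'I_l) (v : 'cV[R[i]]_n),
     ((v^T <= (dft Xperp k)^T)%MS <->
      (forall u : 'cV[R[i]]_n, (u^T <= (dft X k)^T)%MS ->
         (map_mx (@conjc R) u)^T *m v = 0))) :
  tangent_space (@Stiefel R n p l) X =
  [set V : tensor R n p l | exists (W : tensor R p p l) (B : tensor R (n - p) p l),
     tskew W /\ V = tadd (tprod X W) (tprod Xperp B)].
Proof.
case: l X hX Xperp hperp => [|l] X hX Xp hperp.
  apply/seteqP; split => V /= _.
    exists (fun _ => 0), (fun _ => 0); split; apply: funext => -[] //.
  exists (fun _ => X); split => //; last by move=> [].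
  by exists 1 => // t _.
rewrite /Stiefel /= in hX.
have hXXp : tprod (ttr X) Xp = 0 := perp_orth hperp.
apply/seteqP; split => V.
- case=> c [c0 [e e0 hS] hd].
  have hV : tprod (ttr V) X + tprod (ttr X) V = 0.
    apply: funext => k; apply/matrixP => a b.
    have := deriv_gram c0 hd k a b.
    move/(deriv_loc_cst (a := @tid R p l.+1 k a b) e0) => h.
    by rewrite h ?mxE // => t ht; rewrite (hS t ht).
  pose Lm := tprod X (ttr X) + tprod Xp (ttr Xp).
  have inj : forall Z : tensor R n n l.+1, tprod Lm Z = (fun _ => 0) -> Z = (fun _ => 0).
    move=> Z hZ.
    have e1 : tprod (ttr (tprod (ttr X) Z)) (tprod (ttr X) Z) +
              tprod (ttr (tprod (ttr Xp) Z)) (tprod (ttr Xp) Z) = 0.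
      rewrite !ttr_prod !ttrK !tprodA -tprodDr' -[tprod X (tprod (ttr X) Z)]tprodA.
      by rewrite -[tprod Xp (tprod (ttr Xp) Z)]tprodA -tprodDl' hZ tprod0r'.
    have [h1 h2] := gram2_eq0 e1.
    exact: (perp_zero hperp) h1 h2.
  have [M [hM _]] := tinv2 inj.
  have eV : V = tprod X (tprod (ttr X) (tprod M V)) + tprod Xp (tprod (ttr Xp) (tprod M V)).
    transitivity (tprod Lm (tprod M V)); first by rewrite -tprodA hM tid_prod.
    by rewrite /Lm tprodDl' !tprodA.
  exists (tprod (ttr X) (tprod M V)), (tprod (ttr Xp) (tprod M V)); split => //.
  have eW : tprod (ttr X) (tprod M V) = tprod (ttr X) V.
    rewrite [in RHS]eV tprodDr' -[tprod (ttr X) (tprod X _)]tprodA -[tprod (ttr X) (tprod Xp _)]tprodA.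
    by rewrite hX hXXp tprod0l' addr0 tid_prod.
  rewrite /tskew eW ttr_prod ttrK.
  by apply/eqP; rewrite -addr_eq0; apply/eqP.
- case=> W [B [hW ->]].
  have hXpX : tprod (ttr Xp) X = 0 by rewrite -[X]ttrK -ttr_prod hXXp ttr0.
  have hA := Am_skew X Xp B hW.
  set A := Am X Xp W B in hA.
  exists (fun t => tprod (Nt hA (t / 2)) (tprod (Yp A (t / 2)) X)); split.
  + by rewrite mul0r (Nt0 hA) Yp0 !tid_prod.
  + by exists 1 => // t _; exact: curve_St.
  + move=> k i j.
    set AV := tprod A (tadd (tprod X W) (tprod Xp B)).
    apply: (deriv_quad (x0 := X k i j)
      (g := fun t => 1 / 2 * (tprod (Nt hA (t / 2)) AV) k i j)
      (C := 1 / 2 * \sum_(a < l.+1) \sum_(r < n) `|AV a r j|)).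
      move=> t; rewrite (curve_expand hA t (AmX W B hX hXpX)) /=.
      rewrite !mxE; ring.
    move=> t; rewrite normrM ger0_norm ?divr_ge0 //.
    by rewrite ler_pM2l ?divr_gt0 // Nt_prod_bound.
Qed.
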